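(* A flow $v$ on a connected compact surface $S$ is minimal if and only if $\mathrm{LD}(v)=S$.
   Context: A surface is a two-dimensional paracompact manifold, possibly with boundary. A flow is a continuous $\mathbb{R}$-action $v$ on $S$; it is minimal if $S$ has no nonempty proper closed invariant subsets. A point is singular if fixed by the flow, periodic if non-singular with $v_T(x)=x$ for some $T>0$, closed if singular or periodic. An orbit is locally dense if its closure has nonempty interior; $\mathrm{LD}(v)$ is the union of non-closed locally dense orbits. *)

(* Defs.v *)
From HB Require Import structures.
From mathcomp Require Import all_boot all_order all_algebra.
From mathcomp Require Import all_classical all_reals all_analysis.
Set Implicit Arguments. Unset Strict Implicit. Unset Printing Implicit Defensive.
Import Order.TTheory GRing.Theory Num.Theory.
Import numFieldTopology.Exports.
Local Open Scope classical_set_scope.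
Local Open Scope ring_scope.

Definition half_plane (R : realType) : set (R * R) := [set p | 0 <= p.2].

(* S is a topological 2-manifold, possibly with boundary: Hausdorff, and every
   point has an open neighbourhood U homeomorphic (via f, with inverse g) to an
   open subset W `&` half_plane of the closed half-plane. *)
Definition is_surface (R : realType) (S : topologicalType) : Prop :=
  hausdorff_space S /\
  forall x : S, exists (U : set S) (W : set (R * R)) (f : S -> R * R) (g : R * R -> S),
    [/\ open U, U x, open W & f @` U = W `&` @half_plane R] /\
    [/\ {within U, continuous f},
        {within W `&` @half_plane R, continuous g},
        (forall y, U y -> g (f y) = y) &
        (forall p, (W `&` @half_plane R) p -> f (g p) = p)].

Definition is_flow (R : realType) (S : topologicalType) (v : R -> S -> S) : Prop :=
  [/\ continuous (fun p : R * S => v p.1 p.2),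
      (forall x, v 0 x = x) &
      (forall s t x, v (s + t) x = v s (v t x))].

Definition invariant (R : realType) (S : Type) (v : R -> S -> S) (A : set S) : Prop :=
  forall t x, A x -> A (v t x).

Definition minimal_flow (R : realType) (S : topologicalType) (v : R -> S -> S) : Prop :=
  forall A : set S, closed A -> invariant v A -> A = set0 \/ A = setT.

Definition orbit (R : realType) (S : Type) (v : R -> S -> S) (x : S) : set S :=
  [set v t x | t in [set: R]].

Definition singular_pt (R : realType) (S : Type) (v : R -> S -> S) (x : S) : Prop :=
  forall t, v t x = x.

Definition periodic_pt (R : realType) (S : Type) (v : R -> S -> S) (x : S) : Prop :=
  ~ singular_pt v x /\ exists T : R, 0 < T /\ v T x = x.

Definition closed_pt (R : realType) (S : Type) (v : R -> S -> S) (x : S) : Prop :=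
  singular_pt v x \/ periodic_pt v x.

Definition locally_dense (R : realType) (S : topologicalType) (v : R -> S -> S) (x : S) : Prop :=
  (closure (orbit v x))^° !=set0.

Definition LD (R : realType) (S : topologicalType) (v : R -> S -> S) : set S :=
  [set x | ~ closed_pt v x /\ locally_dense v x].

(* Main.v *)
Require Import Defs.
From HB Require Import structures.
From mathcomp Require Import all_boot all_order all_algebra.
From mathcomp Require Import all_classical all_reals all_analysis.
Import numFieldTopology.Exports.
Local Open Scope classical_set_scope.
Local Open Scope ring_scope.
From mathcomp Require Import ring lra.
Import Order.TTheory GRing.Theory Num.Theory.
Set Implicit Arguments. Unset Strict Implicit.

Section Basic.
Variables (R : realType) (S : topologicalType).
Implicit Types (v : R -> S -> S).

Lemma flow_comp v s t x : is_flow v -> v s (v t x) = v (s + t) x.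
Proof. by case=> _ _ ->. Qed.

Lemma flow0 v x : is_flow v -> v 0 x = x.
Proof. by case=> _ ->. Qed.

Lemma flow_inv v t x : is_flow v -> v (- t) (v t x) = x.
Proof. by move=> fl; rewrite flow_comp // addNr flow0. Qed.

Lemma flow_cont_t v x : is_flow v -> continuous (fun t => v t x).
Proof.
case=> c _ _ t.
apply: (continuous_comp (f := fun t : R => (t, x)) (g := fun p : R * S => v p.1 p.2)); last exact: c.
exact: (cvg_pair (f := id) (g := fun=> x) cvg_id (cvg_cst x)).
Qed.

Lemma flow_cont_x v t : is_flow v -> continuous (v t).
Proof.
case=> c _ _ x.
apply: (continuous_comp (f := fun x : S => (t, x)) (g := fun p : R * S => v p.1 p.2)); last exact: c.
exact: (cvg_pair (f := fun=> t) (g := id) (cvg_cst t) cvg_id).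
Qed.

Lemma period_nat v x d : is_flow v -> v d x = x -> forall n : nat, v (n%:R * d) x = x.
Proof.
move=> fl hd; elim=> [|n IH]; first by rewrite mul0r flow0.
by rewrite mulrSr mulrDl mul1r -flow_comp // hd IH.
Qed.

Lemma period_int v x d : is_flow v -> v d x = x -> forall k : int, v (k%:~R * d) x = x.
Proof.
move=> fl hd; case=> n.
  by rewrite -pmulrn period_nat.
rewrite NegzE mulrNz mulNr.
by rewrite -[in LHS](period_nat fl hd n.+1) flow_inv // -pmulrn.
Qed.

Lemma period_reduce v x d (a t : R) : is_flow v -> v d x = x -> 0 < d ->
  exists t', v t x = v t' x /\ a <= t' < a + d.
Proof.
move=> fl hd d0.
set k := Num.floor ((t - a) / d).
exists (t - k%:~R * d); split.
  rewrite -[in RHS](period_int fl hd k) flow_comp //.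
  by congr (v _ x); ring.
have /andP[h1 h2] := floor_itv ((t - a) / d).
rewrite -/k in h1 h2.
rewrite intrD in h2.
have e1 : k%:~R * d <= t - a by rewrite -ler_pdivlMr.
have e2 : t - a < (k%:~R + 1) * d by rewrite -ltr_pdivrMr.
apply/andP; split; lra.
Qed.

End Basic.


Section PartA.
Variables (R : realType) (S : topologicalType).
Implicit Types (v : R -> S -> S).

Lemma LD_minimal v : is_flow v -> connected [set: S] -> LD v = [set: S] ->
  minimal_flow v.
Proof.
move=> fl con LDT A cA iA.
case: (pselect (A = set0)) => [->|nA]; [by left | right].
have A0 : A !=set0 by apply/set0P/eqP.
have oA : open A.
  rewrite openE => y Ay.
  have : LD v y by rewrite LDT.
  case=> _ [z Hz].
  have clz : closure (Defs.orbit v y) z by exact: interior_subset.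
  have nI : nbhs z (closure (Defs.orbit v y))°.
    by apply: open_nbhs_nbhs; split => //; exact: open_interior.
  have [w [[t _ <-] Hw]] := clz _ nI.
  rewrite /interior /=.
  move: Hw => /(flow_cont_x (t := t) fl) /= H.
  have H' : nbhs y ((v t) @^-1` closure (Defs.orbit v y)) := H.
  apply: (filterS _ H') => w' /= cw.
  have clA : closure (Defs.orbit v y) `<=` A.
    rewrite (closure_id A).1 //; apply: closure_subset => _ [s _ <-].
    exact: iA.
  by rewrite -(flow_inv t w' fl); apply: iA; apply: clA.
apply: con => //; exists A => //; by rewrite setTI.
Qed.

Lemma closure_orbit_inv v y : is_flow v -> Defs.invariant v (closure (Defs.orbit v y)).
Proof.
move=> fl t w cw B Bn.
have [z [[s _ <-] Bz]] := cw _ (flow_cont_x (t := t) fl Bn).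
exists (v t (v s y)); split => //.
by exists (t + s) => //; rewrite flow_comp.
Qed.

End PartA.

Section Sing.
Variables (R : realType) (S : topologicalType).

Lemma open_ball2 (W : set (R * R)) p : open W -> W p ->
  exists2 e, 0 < e & forall q : R * R, `|p.1 - q.1| < e -> `|p.2 - q.2| < e -> W q.
Proof.
move=> oW Wp; have : nbhs p W by apply: open_nbhs_nbhs.
move=> /nbhs_ballP [e e0 He]; exists e => // q h1 h2; apply: He.
by split; rewrite -ball_normE /ball_ /=.
Qed.

Lemma surface_not_point (x : S) : is_surface R S -> [set: S] = [set x] -> False.
Proof.
case=> _ /(_ x) [U [W [f [g [[oU Ux oW fU] _]]]]] hx.
have : (W `&` @half_plane R) (f x) by rewrite -fU; exists x.
case=> Wp Hp.
have [e e0 He] := open_ball2 oW Wp.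
set q : R * R := ((f x).1 + e / 2, (f x).2).
have Wq : (W `&` @half_plane R) q.
  split; last by rewrite /half_plane /=.
  apply: He => /=; last by rewrite subrr normr0.
  rewrite opprD addrA subrr add0r normrN ger0_norm; lra.
rewrite -fU in Wq; case: Wq => y _ fy.
have : [set x] y by rewrite -hx.
move=> /= yx; subst y.
have : (f x).1 = q.1 by rewrite fy.
rewrite /q /=; lra.
Qed.
End Sing.

Section MinPer.
Variables (R : realType) (S : topologicalType).

Lemma min_period (v : R -> S -> S) (x : S) : is_flow v -> hausdorff_space S ->
  periodic_pt v x ->
  exists T0, [/\ 0 < T0, v T0 x = x & forall t, 0 < t < T0 -> v t x <> x].
Proof.
move=> fl hS [nsing [T [T0p vT]]].
have [e e0 he] : exists2 e, 0 < e & forall t, 0 < t < e -> v t x <> x.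
  apply: contrapT => H.
  have H' : forall e, 0 < e -> exists t, 0 < t < e /\ v t x = x.
    move=> e e0; apply: contrapT => nE; apply: H; exists e => // t ht vt.
    by apply: nE; exists t.
  apply: nsing => s.
  apply/esym; apply: hS; move=> A B nA nB.
  exists (v s x); split; last exact: nbhs_singleton.
  have hc : (fun t : R => v t x) @ (0:R) --> x.
    have := @flow_cont_t _ _ v x fl 0; by rewrite /continuous_at /= flow0.
  have /nbhs_ballP [r r0 Hr] := hc _ nA.
  have [d [/andP [d0 dr] vd]] := H' r r0.
  have [t' [-> /andP [t0 td]]] := period_reduce 0 s fl vd d0.
  apply: (Hr t'); rewrite -ball_normE /ball_ /= sub0r normrN ger0_norm //.
  lra.
set C := [set t | v t x = x] `&` [set` `[e, T]].
have eT : e <= T.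
  rewrite leNgt; apply/negP => Te; apply: (he T) => //; by rewrite T0p Te.
have CT : C T by split => //=; rewrite in_itv /= eT lexx.
have cC : closed C.
  apply: closedI; last exact: itv_closed.
  have := (continuous_closedP (fun t : R => v t x)).1 (flow_cont_t fl) [set x].
  apply; exact/accessible_closed_set1/hausdorff_accessible.
have lbC : lbound C e by move=> t [_ /=]; rewrite in_itv /= => /andP [].
have infC : C (inf C).
  apply: (itv_closed_infimums _ cC); first by exists T.
  split; first by apply: ge_inf; exists e.
  move=> y ly; apply: lb_le_inf => //; by exists T.
case: (infC) => vI /=; rewrite in_itv /= => /andP [eI IT].
exists (inf C); split => //; first lra.
move=> t /andP [t0 tI] vt.
have [te|et] := ltP t e; first by apply: (he t) => //; rewrite t0 te.
have Ct : C t by split => //=; rewrite in_itv /= et /=; lra.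
have := ge_inf (ex_intro _ e lbC) Ct; lra.
Qed.
End MinPer.

Section Core.
Variables (R : realType) (S : topologicalType).

Lemma core (v : R -> S -> S) (x : S) (T0 : R) (D : set (R * R)) (g : R * R -> S)
  (sg : R -> R * R) (A B Q : R * R) (a b m : R) :
  is_flow v -> hausdorff_space S -> 0 < T0 ->
  (forall s t, `|s - t| < T0 -> v s x = v t x -> s = t) ->
  {within D, continuous g} ->
  (forall z w, D z -> D w -> g z = g w -> z = w) ->
  (forall z, D z -> exists t, -(T0/4) <= t <= T0/4 /\ g z = v t x) ->
  continuous sg -> (forall u, 0 <= u <= 1 -> D (sg u)) ->
  sg 0 = A -> sg 1 = B -> D Q -> (forall u, 0 <= u <= 1 -> sg u <> Q) ->
  g A = v a x -> g B = v b x -> g Q = v m x ->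
  -(T0/4) <= a <= T0/4 -> -(T0/4) <= b <= T0/4 -> -(T0/4) <= m <= T0/4 ->
  (m < a \/ m < b) -> (a < m \/ b < m) -> False.
Proof.
move=> fl hS T0p inj gc ginj par sc sD s0 s1 DQ sQ gA gB gQ ha hb hm hab1 hab2.
set q := T0 / 4 in par ha hb hm.
have q0 : 0 < q by rewrite /q; lra.
have T0q : T0 = 4 * q by rewrite /q; field.
set I := [set` `[0 : R, 1]].
have IP : forall u, I u -> D (sg u).
  by move=> u; rewrite /I /= in_itv /= => /sD.
have Gc : {within I, continuous (g \o sg)}.
  apply/subspace_continuousP => u Iu.
  have Du := IP u Iu.
  have h1 : sg @ within I (nbhs u) --> within D (nbhs (sg u)).
    move=> P /= hP.
    have := sc u _ hP.
    move=> H; have H' : nbhs u (fun w => D (sg w) -> P (sg w)) := H.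
    suff : nbhs u (fun w => I w -> P (sg w)) by [].
    apply: (filterS _ H') => w Hw Iw; apply: Hw; exact: IP.
  have h2 := (subspace_continuousP _ _).1 gc _ Du.
  exact: (cvg_comp sg g h1 h2).
have conn := @connected_continuous_connected _ _ I (g \o sg) (@segment_connected R 0 1) Gc.
set G := (g \o sg) @` I in conn.
set c := fun t => v t x.
have cC : forall lo hi, closed (c @` [set` `[lo, hi]]).
  move=> lo hi; apply: compact_closed => //; apply: continuous_compact.
    apply: continuous_subspaceT; exact: flow_cont_t.
  exact: segment_compact.
have inC : forall t lo hi, -q <= t <= q -> -q <= lo -> hi <= q ->
    (c @` [set` `[lo, hi]]) (c t) -> lo <= t <= hi.
  move=> t lo hi /andP [t1 t2] hlo hhi [s]; rewrite /= in_itv /= => /andP [hs1 hs2] cs.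
  have -> : t = s; last by rewrite hs1 hs2.
  apply: inj; last by rewrite /c in cs; rewrite cs.
  rewrite ltr_norml; apply/andP; split; lra.
set C1 := c @` [set` `[-q, m]].
set C2 := c @` [set` `[m, q]].
have common : forall y, C1 y -> C2 y -> G y -> False.
  move=> y [t1 /= ht1 <-] [t2 /= ht2 e12] [u Iu /= eu].
  move: ht1 ht2; rewrite !in_itv /= => /andP [h11 h12] /andP [h21 h22].
  have t12 : t2 = t1.
    apply: inj => //; rewrite ltr_norml; apply/andP; split; lra.
  have t1m : t1 = m by lra.
  apply: (sQ u); first by move: Iu; rewrite /I /= in_itv.
  apply: ginj; [exact: IP | exact: DQ | ].
  by rewrite eu gQ /c t1m.
have sep : separated (C1 `&` G) (C2 `&` G).
  split; apply/seteqP; split=> // y [].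
  - move=> /closureI [cl1 _] [c2 gy]; apply: (common y) => //.
    by rewrite ((closure_id C1).1 (cC _ _)).
  - move=> [c1 gy] /closureI [cl2 _]; apply: (common y) => //.
    by rewrite ((closure_id C2).1 (cC _ _)).
have cov : G `<=` (C1 `&` G) `|` (C2 `&` G).
  move=> y Gy; case: (Gy) => u Iu eu.
  have [t [/andP [ht1 ht2] et]] := par _ (IP u Iu).
  have Ct : forall lo hi, lo <= t <= hi -> (c @` [set` `[lo, hi]]) y.
    by move=> lo hi h; exists t; [rewrite /= in_itv /= h | rewrite /c -et -eu].
  have [tm|mt] := leP t m; [left|right]; split=> //; apply: Ct.
    by rewrite ht1 tm.
  by rewrite ht2 ltW.
have G0 : G (c a) by exists 0; [rewrite /I /= in_itv /= lexx ler01 | rewrite /= s0 gA].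
have G1 : G (c b) by exists 1; [rewrite /I /= in_itv /= lexx ler01 | rewrite /= s1 gB].
have [GC|GC] := connected_subset sep cov conn.
- have /andP [_ am] := inC a (-q) m ha (lexx _) (proj2 (andP hm)) (proj1 (GC _ G0)).
  have /andP [_ bm] := inC b (-q) m hb (lexx _) (proj2 (andP hm)) (proj1 (GC _ G1)).
  case: hab1; lra.
- have /andP [ma _] := inC a m q ha (proj1 (andP hm)) (lexx _) (proj1 (GC _ G0)).
  have /andP [mb _] := inC b m q hb (proj1 (andP hm)) (lexx _) (proj1 (GC _ G1)).
  case: hab2; lra.
Qed.
End Core.

Section Per.
Variables (R : realType) (S : topologicalType).

Lemma lin_cont (a b : R) : continuous (fun u : R => a + u * b).
Proof.
move=> u; apply: cvgD; first exact: cvg_cst. apply: cvgMl. exact: cvg_id.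
Qed.

Definition seg (A B : R * R) := fun u : R => (A.1 + u * (B.1 - A.1), A.2 + u * (B.2 - A.2)).

Lemma segc (A B : R * R) : continuous (seg A B).
Proof.
move=> u. have := (cvg_pair (@lin_cont A.1 (B.1 - A.1) u) (@lin_cont A.2 (B.2 - A.2) u)).
move=> H; exact: H.
Qed.

Lemma seg0 A B : seg A B 0 = A.
Proof. by case: A => a1 a2; rewrite /seg /= !mul0r !addr0. Qed.

Lemma seg1 A B : seg A B 1 = B.
Proof. by case: A => a1 a2; case: B => b1 b2; rewrite /seg /= !mul1r; congr pair; ring. Qed.

Lemma periodic_contra (v : R -> S -> S) (x : S) : is_surface R S -> is_flow v ->
  periodic_pt v x -> Defs.orbit v x = [set: S] -> False.
Proof.
move=> surf fl per oT.
have hS := proj1 surf.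
have [T0 [T0p vT0 minT]] := min_period fl hS per.
have inj : forall s t, `|s - t| < T0 -> v s x = v t x -> s = t.
  have key : forall s t, s < t -> t - s < T0 -> v s x = v t x -> False.
    move=> s' t' st ts e; apply: (minT (t' - s')); first by rewrite subr_gt0 st ts.
    rewrite -[in RHS](flow_inv s' x fl) e flow_comp //; congr (v _ x); ring.
  move=> s t hst est; move: hst; rewrite ltr_norml => /andP [h1 h2].
  case: (ltgtP s t) => // [st|ts].
  - by exfalso; apply: (key s t st) => //; lra.
  - by exfalso; apply: (key t s ts) => //; lra.
set q := T0 / 4.
have q0 : 0 < q by rewrite /q; lra.
have T0q : T0 = 4 * q by rewrite /q; field.
set c := fun t => v t x.
set K := c @` [set` `[q, 3 * q]].
have cK : closed K.
  apply: compact_closed => //; apply: continuous_compact.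
    apply: continuous_subspaceT; exact: flow_cont_t.
  exact: segment_compact.
have xK : ~ K x.
  case=> t; rewrite /= in_itv /= => /andP [h1 h2] ct.
  by apply: (minT t) => //; apply/andP; split; lra.
case: surf => _ /(_ x) [U [W [f [g [[oU Ux oW fU] [cf cg gf fg]]]]]].
set p := f x.
have Dp : (W `&` @half_plane R) p by rewrite -fU; exists x.
have gp : g p = x by apply: gf.
have h := (subspace_continuousP _ _).1 cg p Dp.
have nO : nbhs (g p) (~` K).
  rewrite gp; apply: open_nbhs_nbhs; split; [exact: closed_openC | exact: xK].
have /nbhs_ballP [e1 e1p He1] := h _ nO.
have [e2 e2p He2] := open_ball2 oW (proj1 Dp).
set e0 := Num.min e1 e2.
have e0p : 0 < e0 by rewrite lt_min e1p e2p.
have e01 : e0 <= e1 by rewrite ge_min lexx.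
have e02 : e0 <= e2 by rewrite ge_min lexx orbT.
set D := [set z | (W `&` @half_plane R) z /\ `|p.1 - z.1| < e0 /\ `|p.2 - z.2| < e0].
have gcD : {within D, continuous g}.
  by apply: (continuous_subspaceW _ cg) => z [].
have ginj : forall z w, D z -> D w -> g z = g w -> z = w.
  by move=> z w [Dz _] [Dw _] e; rewrite -(fg z Dz) -(fg w Dw) e.
have par : forall z, D z -> exists t, -(T0/4) <= t <= T0/4 /\ g z = v t x.
  move=> z [Dz [h1 h2]].
  have nK : ~ K (g z).
    apply: (He1 z) => //; split; rewrite -ball_normE /ball_ /=; lra.
  have : Defs.orbit v x (g z) by rewrite oT.
  case=> t0 _ et0.
  have [t [et /andP [ht1 ht2]]] := period_reduce (-q) t0 fl vT0 T0p.
  exists t; split; last by rewrite -et0 et.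
  rewrite -/q; apply/andP; split => //.
  rewrite leNgt; apply/negP => qt; apply: nK; exists t.
    by rewrite /= in_itv /=; apply/andP; split; lra.
  by rewrite /c -et0 et.
set e := e0 / 2.
have ep : 0 < e by rewrite /e; lra.
have ee0 : e < e0 by rewrite /e; lra.
have hp : 0 <= p.2 by have := proj2 Dp.
have ptD : forall z, 0 <= z.1 - p.1 <= e -> 0 <= z.2 - p.2 <= e -> D z.
  move=> z /andP [a1 a2] /andP [b1 b2].
  have n1 : `|p.1 - z.1| < e0 by rewrite distrC ger0_norm //; lra.
  have n2 : `|p.2 - z.2| < e0 by rewrite distrC ger0_norm //; lra.
  split; last by split.
  split; first by apply: He2; lra.
  rewrite /half_plane /=; lra.
have segD : forall A B, 0 <= A.1 - p.1 <= e -> 0 <= A.2 - p.2 <= e ->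
    0 <= B.1 - p.1 <= e -> 0 <= B.2 - p.2 <= e ->
    forall u, 0 <= u <= 1 -> D (seg A B u).
  move=> A B /andP [a1 a2] /andP [a3 a4] /andP [b1 b2] /andP [b3 b4] u /andP [u0 u1].
  apply: ptD; rewrite /seg /=; apply/andP; split; nra.
set P1 : R * R := (p.1 + e, p.2).
set P2 : R * R := (p.1, p.2 + e).
have cz : 0 <= p.1 - p.1 <= e by rewrite subrr lexx ltW.
have cz' : 0 <= p.2 - p.2 <= e by rewrite subrr lexx ltW.
have c1x : 0 <= P1.1 - p.1 <= e by rewrite /P1 /=; apply/andP; split; lra.
have c1y : 0 <= P1.2 - p.2 <= e by rewrite /P1 /=; apply/andP; split; lra.
have c2x : 0 <= P2.1 - p.1 <= e by rewrite /P2 /=; apply/andP; split; lra.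
have c2y : 0 <= P2.2 - p.2 <= e by rewrite /P2 /=; apply/andP; split; lra.
have D0 := ptD p cz cz'.
have D1 := ptD P1 c1x c1y.
have D2 := ptD P2 c2x c2y.
have [t0 [h0 g0]] := par p D0.
have [t1 [h1 g1]] := par P1 D1.
have [t2 [h2 g2]] := par P2 D2.
have av0 : forall u, 0 <= u <= 1 -> seg P1 P2 u <> p.
  move=> u /andP [u0 u1] E; have E1 := congr1 fst E; have E2 := congr1 snd E.
  rewrite /seg /P1 /P2 /= in E1 E2.
  have E3 : u * e = p.2 + u * (p.2 + e - p.2) - p.2 by ring.
  have ue : u * e = 0 by rewrite E3 E2 subrr.
  have u00 : u = 0 by move/eqP: ue; rewrite mulf_eq0 => /orP [/eqP //|/eqP e00]; move: ep; rewrite e00 ltxx.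
  by move: E1; rewrite u00 mul0r addr0; lra.
have av1 : forall u, 0 <= u <= 1 -> seg p P2 u <> P1.
  move=> u /andP [u0 u1] E; have E1 := congr1 fst E.
  by rewrite /seg /P1 /P2 /= subrr mulr0 addr0 in E1; move: E1 ep; clear; lra.
have av2 : forall u, 0 <= u <= 1 -> seg p P1 u <> P2.
  move=> u /andP [u0 u1] E; have E2 := congr1 snd E.
  by rewrite /seg /P1 /P2 /= subrr mulr0 addr0 in E2; move: E2 ep; clear; lra.
have d01 : t0 <> t1.
  move=> E; have : p = P1 by apply: ginj => //; rewrite g0 g1 E.
  by move=> /(congr1 fst); rewrite /P1 /=; lra.
have d02 : t0 <> t2.
  move=> E; have : p = P2 by apply: ginj => //; rewrite g0 g2 E.
  by move=> /(congr1 snd); rewrite /P2 /=; lra.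
have d12 : t1 <> t2.
  move=> E; have : P1 = P2 by apply: ginj => //; rewrite g1 g2 E.
  by move=> /(congr1 fst); rewrite /P1 /P2 /=; lra.
have k0 : (t0 < t1 \/ t0 < t2) -> (t1 < t0 \/ t2 < t0) -> False :=
  core fl hS T0p inj gcD ginj par (@segc P1 P2) (segD P1 P2 c1x c1y c2x c2y)
    (@seg0 P1 P2) (@seg1 P1 P2) D0 av0 g1 g2 g0 h1 h2 h0.
have k1 : (t1 < t0 \/ t1 < t2) -> (t0 < t1 \/ t2 < t1) -> False :=
  core fl hS T0p inj gcD ginj par (@segc p P2) (segD p P2 cz cz' c2x c2y)
    (@seg0 p P2) (@seg1 p P2) D1 av1 g0 g2 g1 h0 h2 h1.
have k2 : (t2 < t0 \/ t2 < t1) -> (t0 < t2 \/ t1 < t2) -> False :=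
  core fl hS T0p inj gcD ginj par (@segc p P1) (segD p P1 cz cz' c1x c1y)
    (@seg0 p P1) (@seg1 p P1) D2 av2 g0 g1 g2 h0 h1 h2.
case: (ltgtP t0 t1) => [a|a|a]; case: (ltgtP t0 t2) => [b|b|b];
  case: (ltgtP t1 t2) => [c'|c'|c'];
  first [ by apply: k0; auto | by apply: k1; auto | by apply: k2; auto
        | by apply: d01 | by apply: d02 | by apply: d12 | lra ].
Qed.
End Per.

Unset Implicit Arguments. Set Strict Implicit.

Theorem lemma4p1 (R : realType) (S : topologicalType) (v : R -> S -> S) :
  is_surface R S -> connected [set: S] -> compact [set: S] -> is_flow v ->
  (minimal_flow v <-> LD v = [set: S]).
Proof.
move=> surf con cpt fl.
have hS := proj1 surf.
split; last by move=> ldt; exact: LD_minimal fl con ldt.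
move=> mf; apply/seteqP; split => // y _.
have Oy : Defs.orbit v y y by exists 0 => //; rewrite flow0.
split.
- move=> [sing|per].
  + have iy : Defs.invariant v [set y] by move=> t z ->; exact: sing.
    have cy : closed [set y] by apply: accessible_closed_set1; exact: hausdorff_accessible.
    case: (mf [set y] cy iy) => e.
      by have : [set y] y by []; rewrite e.
    exact: (surface_not_point surf (esym e)).
  + have [T0 [T0p vT0 _]] := min_period fl hS per.
    have oE : Defs.orbit v y = (fun t => v t y) @` [set` `[0, T0]].
      apply/seteqP; split => z [t _ <-].
      - have [t' [-> /andP [h1 h2]]] := period_reduce 0 t fl vT0 T0p.
        by exists t' => //; rewrite /= in_itv /= h1 /=; rewrite add0r in h2; exact: ltW.
      - by exists t.
    have cO : closed (Defs.orbit v y).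
      rewrite oE; apply: compact_closed => //; apply: continuous_compact.
        apply: continuous_subspaceT; exact: flow_cont_t.
      exact: segment_compact.
    have iO : Defs.invariant v (Defs.orbit v y).
      by move=> t z [s _ <-]; exists (t + s) => //; rewrite flow_comp.
    case: (mf _ cO iO) => e.
      by move: Oy; rewrite e.
    exact: periodic_contra surf fl per e.
- rewrite /locally_dense.
  case: (mf _ (@closed_closure _ _) (closure_orbit_inv (y:=y) fl)) => e.
    have : closure (Defs.orbit v y) y by apply: subset_closure.
    by rewrite e.
  by rewrite e interiorT; exists y.
Qed.
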